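(* Let $\mathcal P=\mathcal P(V,R)$ be a binary quadratic operad over a field $\Bbbk$ (with $\dim V<\infty$) which is a Dong operad. Then the operads $\mathrm{di}\,\mathcal P=\mathrm{Perm}\otimes\mathcal P$ and $\mathrm{tri}\,\mathcal P=\mathrm{ComTriAs}\otimes\mathcal P$ (Hadamard products, governing the di- and tri-algebra replications of $\mathcal P$-algebras) are also Dong operads.
   Context: A binary quadratic operad $\mathcal P(V,R)$ is generated by a finite-dimensional $S_2$-module $V$ of binary operations with relations $R\subseteq\mathcal F_V(3)$, where $\mathcal F_V$ is the free operad on $V$. $\mathrm{Perm}$ is the operad of Perm algebras (associative algebras with $(xy)z=(yx)z$), $\mathrm{ComTriAs}$ the operad of commutative triassociative algebras; $\otimes$ denotes the Hadamard (arity-wise tensor) product of operads. Formal distributions and the Dong Property: for an algebra $A$ with a family of bilinear operations (the operations of $V$, a family closed under the $S_2$-action), a formal distribution over $A$ is a series $a(z)=\sum_{s\in\mathbb Z}a(s)z^{-s-1}$ with $a(s)\in A$. Two distributions $a(z),b(z)$ are local if for every operation $*$ there is $N\ge0$ with $(w-z)^N a(w)*b(z)=0$ in $A[[z,z^{-1},w,w^{-1}]]$ (and likewise with $a,b$ interchanged). For $n\in\mathbb Z_+$ and an operation $*$, the $n$-product is $(a\,{*}_{(n)}\,b)(w)=\mathrm{Res}_{\xi=0}(\xi-w)^n a(\xi)*b(w)$. An operad $\mathcal P$ is a Dong operad (satisfies the Dong Property) if for every $\mathcal P$-algebra $A$ and every three pairwise local formal distributions $a(z),b(z),c(z)$ over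 $A$, the distributions $(a\,{*}_{(n)}\,b)(z)$ and $c(z)$ are local for every $n\in\mathbb Z_+$ and every operation $*$. *)

(* Defs.v *)
From HB Require Import structures.
From mathcomp Require Import all_boot all_algebra.

Set Implicit Arguments.
Unset Strict Implicit.
Unset Printing Implicit Defensive.

Import GRing.Theory.
Local Open Scope ring_scope.

(* Binary trees (monomials of the free operad / free nonassociative algebra) *)

Inductive tm (L : Type) := Leaf of nat | Node of L & tm L & tm L.
Arguments Leaf {L}.

Fixpoint tm_eqb (L : eqType) (t u : tm L) : bool :=
  match t, u with
  | Leaf i, Leaf j => i == j
  | Node a l r, Node b l' r' => [&& a == b, tm_eqb l l' & tm_eqb r r']
  | _, _ => false
  end.

Lemma tm_eqP (L : eqType) : Equality.axiom (@tm_eqb L).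
Proof.
elim=> [i|a l IHl r IHr] [j|b l' r'] /=; try by constructor.
- by apply: (iffP eqP) => [->|[]].
- case: (a =P b) => [->|nab] /=; last by constructor; case.
  case: (IHl l') => [->|nl] /=; last by constructor; case.
  case: (IHr r') => [->|nr] /=; last by constructor; case.
  by constructor.
Qed.

HB.instance Definition _ (L : eqType) := hasDecEq.Build (tm L) (@tm_eqP L).

Fixpoint leaves (L : Type) (t : tm L) : seq nat :=
  match t with Leaf i => [:: i] | Node _ l r => leaves l ++ leaves r end.

Fixpoint tsubst (L : Type) (u : nat -> tm L) (t : tm L) : tm L :=
  match t with Leaf i => u i | Node a l r => Node a (tsubst u l) (tsubst u r) end.

Fixpoint tmap (L L' : Type) (f : L -> L') (t : tm L) : tm L' :=
  match t with Leaf i => Leaf i | Node a l r => Node (f a) (tmap f l) (tmap f r) end.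

Fixpoint labels_ok (L : Type) (P : L -> bool) (t : tm L) : bool :=
  match t with Leaf _ => true | Node a l r => [&& P a, labels_ok P l & labels_ok P r] end.

Inductive ctx (L : Type) :=
  Hole | CtxL of L & ctx L & tm L | CtxR of L & tm L & ctx L.
Arguments Hole {L}.

Fixpoint plug (L : Type) (C : ctx L) (x : tm L) : tm L :=
  match C with
  | Hole => x
  | CtxL a C r => Node a (plug C x) r
  | CtxR a l C => Node a l (plug C x)
  end.

Definition fsum (K : Type) (L : Type) := seq (K * tm L).

Definition coef (K : nmodType) (L : eqType) (f : fsum K L) (t : tm L) : K :=
  \sum_(p <- f | p.2 == t) p.1.

Section Eval.
Variables (K : pzRingType) (A : lmodType K) (L : Type).
Variables (op : L -> A -> A -> A) (env : nat -> A).

Fixpoint teval (t : tm L) : A :=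
  match t with Leaf i => env i | Node a l r => op a (teval l) (teval r) end.

Definition peval (f : fsum K L) : A := \sum_(p <- f) p.1 *: teval p.2.
End Eval.

Definition trilin (K : pzRingType) (V A : lmodType K) (op : V -> A -> A -> A) :=
  [/\ forall k v v' a b, op (k *: v + v') a b = k *: op v a b + op v' a b,
      forall v k a a' b, op v (k *: a + a') b = k *: op v a b + op v a' b &
      forall v a k b b', op v a (k *: b + b') = k *: op v a b + op v a b'].

(*   V : finite-dimensional S_2-module, the transposition acting by tau.      *)
(*   An element of F_V(3) is given by a formal linear combination of trees    *)
(*   with node labels in V and leaves 0,1,2, each occurring exactly once.     *)
(*   R is given as a set of elements of F_V(3) (its span is the relation      *)
(*   space).                                                                  *)

Definition quadratic_rel (K : Type) (V : Type) (R : fsum K V -> Prop) :=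
  forall r, R r -> all (fun p => perm_eq (leaves p.2) [:: 0; 1; 2]%N) r.

Definition P_alg (K : fieldType) (V : vectType K) (tau : V -> V)
    (R : fsum K V -> Prop) (A : lmodType K) (op : V -> A -> A -> A) : Prop :=
  [/\ trilin op,
      forall v a b, op (tau v) a b = op v b a &
      forall r, R r -> forall env : nat -> A, peval op env r = 0].

(* The operadic ideal: the span of the generators of the kernel of the map  *)
(* from formal combinations of V-labelled trees to P = F_V/(R):             *)
(* linearity in the labels, S_2-equivariance of the labels, and the         *)
(* consequences C[r(u_0,u_1,u_2)] of the relations r in R.                   *)
Section Ideal.
Variables (K : fieldType) (V : vectType K) (tau : V -> V) (R : fsum K V -> Prop).

Inductive pgen : fsum K V -> Prop :=
| pgen_lin (C : ctx V) (k : K) (v v' : V) (l r : tm V) :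
    pgen [:: (1, plug C (Node (k *: v + v') l r));
             (- k, plug C (Node v l r));
             (- 1, plug C (Node v' l r))]
| pgen_sym (C : ctx V) (v : V) (l r : tm V) :
    pgen [:: (1, plug C (Node (tau v) l r)); (- 1, plug C (Node v r l))]
| pgen_rel (C : ctx V) (r : fsum K V) (u : nat -> tm V) :
    R r -> pgen [seq (p.1, plug C (tsubst u p.2)) | p <- r].

Inductive pideal : fsum K V -> Prop :=
| pideal_gen h : pgen h -> pideal h
| pideal_nil : pideal [::]
| pideal_scale (k : K) h : pideal h -> pideal [seq (k * p.1, p.2) | p <- h]
| pideal_add h1 h2 : pideal h1 -> pideal h2 -> pideal (h1 ++ h2)
| pideal_ext h1 h2 : pideal h1 -> (forall t, coef h1 t = coef h2 t) -> pideal h2.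
End Ideal.

(* Hadamard products M (x) P with M = Perm or ComTriAs.                       *)
(* M(n) has a basis indexed by "marked" sets of inputs: a single input for   *)
(* Perm (the rightmost variable of a Perm monomial), a nonempty subset for   *)
(* ComTriAs.  The basis of M(2) is encoded by s : bool * bool (s.1 = first   *)
(* input marked, s.2 = second input marked); the transposition acts by swap. *)
(* Composition: the marked set of a composite tree is obtained by following  *)
(* the markings from the root.                                               *)

Definition Perm_mark (s : bool * bool) : bool := s.1 != s.2.       (* x1 -| x2, x1 |- x2 *)
Definition ComTriAs_mark (s : bool * bool) : bool := s.1 || s.2.   (* -|, |-, _|_ *)

Definition swap2 (s : bool * bool) : bool * bool := (s.2, s.1).

Fixpoint marked (V : Type) (t : tm ((bool * bool) * V)) : seq nat :=
  match t with
  | Leaf i => [:: i]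
  | Node a l r => (if a.1.1 then marked l else [::]) ++ (if a.1.2 then marked r else [::])
  end.

(* component of f in the summand e_T (x) P(n) of M(n) (x) P(n) *)
Definition proj_mark (K : Type) (V : Type) (T : seq nat)
    (f : fsum K ((bool * bool) * V)) : fsum K V :=
  [seq (p.1, tmap snd p.2) | p <- f & perm_eq (marked p.2) T].

(* (M (x) P)-algebras: operations op s v (s a basis element of M(2), v in V), *)
(* i.e. operations indexed by M(2) (x) V, trilinear, S_2-equivariant, and     *)
(* satisfying every multilinear identity (of any arity n) lying in the kernel *)
(* of F_{M(2) (x) V}(n) -> M(n) (x) P(n).                                     *)
Definition Had_alg (mk : pred (bool * bool)) (K : fieldType) (V : vectType K)
    (tau : V -> V) (R : fsum K V -> Prop) (A : lmodType K)
    (op : bool * bool -> V -> A -> A -> A) : Prop :=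
  [/\ forall s, mk s -> trilin (op s),
      forall s v a b, mk s -> op (swap2 s) (tau v) a b = op s v b a &
      forall (n : nat) (f : fsum K ((bool * bool) * V)),
        all (fun p => labels_ok (fun a => mk a.1) p.2 &&
                      perm_eq (leaves p.2) (iota 0 n)) f ->
        (forall T : seq nat, pideal tau R (proj_mark T f)) ->
        forall env : nat -> A, peval (fun a => op a.1 a.2) env f = 0].

(* an operation of M (x) P, i.e. an element w = sum_s e_s (x) w s of M(2) (x) V *)
Definition Had_act (mk : pred (bool * bool)) (K : pzRingType) (V : Type) (A : lmodType K)
    (op : bool * bool -> V -> A -> A -> A) (w : bool * bool -> V) (a b : A) : A :=
  \sum_(s : bool * bool | mk s) op s (w s) a b.

(* Formal distributions a(z) = sum_s a(s) z^{-s-1}, represented by the       *)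
(* coefficient function s |-> a(s).  A series in A[[z,z^-1,w,w^-1]] is        *)
(* represented by F s t = coefficient of w^{-s-1} z^{-t-1}.                   *)

Section Distributions.
Variables (K : pzRingType) (A : lmodType K).

(* a(w) * b(z) *)
Definition dprod (op : A -> A -> A) (a b : int -> A) : int -> int -> A :=
  fun s t => op (a s) (b t).

(* multiplication by (w - z) *)
Definition mul_wz (F : int -> int -> A) : int -> int -> A :=
  fun s t => F (s + 1)%R t - F s (t + 1)%R.

Definition local_op (op : A -> A -> A) (a b : int -> A) : Prop :=
  exists N : nat, forall s t, iter N mul_wz (dprod op a b) s t = 0.

Definition local (O : Type) (act : O -> A -> A -> A) (a b : int -> A) : Prop :=
  forall o, local_op (act o) a b /\ local_op (act o) b a.

(* (a *_(n) b)(w) = Res_{xi=0} (xi - w)^n a(xi) * b(w): the coefficient of   *)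
(* xi^{-1} (index s = 0) of (xi - w)^n a(xi) * b(w).                          *)
Definition nprod (op : A -> A -> A) (n : nat) (a b : int -> A) : int -> A :=
  fun t => iter n mul_wz (dprod op a b) 0 t.
End Distributions.

Definition Dong (K : pzRingType) (O : Type) (Str : lmodType K -> Type)
    (IsAlg : forall A, Str A -> Prop)
    (act : forall A, Str A -> O -> A -> A -> A) : Prop :=
  forall (A : lmodType K) (s : Str A), IsAlg A s ->
  forall a b c : int -> A,
    local (act A s) a b -> local (act A s) b c -> local (act A s) a c ->
    forall (o : O) (n : nat), local (act A s) (nprod (act A s o) n a b) c.

Definition Dong_P (K : fieldType) (V : vectType K) (tau : V -> V) (R : fsum K V -> Prop) :=
  @Dong K V (fun A => V -> A -> A -> A) (@P_alg K V tau R) (fun A op => op).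

Definition Dong_Had (mk : pred (bool * bool)) (K : fieldType) (V : vectType K)
    (tau : V -> V) (R : fsum K V -> Prop) :=
  @Dong K (bool * bool -> V) (fun A => bool * bool -> V -> A -> A -> A)
    (@Had_alg mk K V tau R) (fun A op => @Had_act mk K V A op).

(* Main.v *)
Require Import Defs.
From mathcomp Require Import all_boot all_algebra.
From HB Require Import structures.
From Stdlib Require Import ClassicalEpsilon FunctionalExtensionality PropExtensionality.
Set Implicit Arguments. Unset Strict Implicit. Unset Printing Implicit Defensive.
Import GRing.Theory.
Local Open Scope ring_scope.

Record subsp (K : pzRingType) (A : lmodType K) := Subsp {
  sp :> A -> Prop;
  sp0 : sp 0;
  spD : forall k x y, sp x -> sp y -> sp (k *: x + y) }.

Section SubspTheory.
Variables (K : pzRingType) (A : lmodType K) (S : subsp A).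
Lemma spA x y : S x -> S y -> S (x + y).
Proof. by move=> ? ?; rewrite -[x]scale1r; apply: spD. Qed.
Lemma spZ k x : S x -> S (k *: x).
Proof. by move=> ?; rewrite -[_ *: _]addr0; apply: spD => //; apply: sp0. Qed.
Lemma spN x : S x -> S (- x).
Proof. by move=> ?; rewrite -scaleN1r; apply: spZ. Qed.
Lemma spB x y : S x -> S y -> S (x - y).
Proof. by move=> ? ?; apply: spA => //; apply: spN. Qed.
Lemma spBC x y : S (x - y) -> S (y - x).
Proof. by move=> h; rewrite -opprB; apply: spN. Qed.
Lemma spBtr x y z : S (x - y) -> S (y - z) -> S (x - z).
Proof. by move=> h1 h2; rewrite -(subrKA y); apply: spA. Qed.
End SubspTheory.

Definition canon (K : pzRingType) (A : lmodType K) (S : subsp A) (x : A) : A :=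
  epsilon (inhabits (0 : A)) (fun y => S (x - y)).

Lemma canon_spec (K : pzRingType) (A : lmodType K) (S : subsp A) x : S (x - canon S x).
Proof.
rewrite /canon; apply: (epsilon_spec (inhabits (0:A)) (fun y => S (x - y))).
by exists x; rewrite subrr; apply: sp0.
Qed.

Lemma canon_eq (K : pzRingType) (A : lmodType K) (S : subsp A) x y :
  S (x - y) -> canon S x = canon S y.
Proof.
move=> h; rewrite /canon; congr epsilon; apply: functional_extensionality => z.
apply: propositional_extensionality; split => hz.
- by apply: (spBtr (spBC h)).
- by apply: (spBtr h).
Qed.

Lemma canon_canon (K : pzRingType) (A : lmodType K) (S : subsp A) x :
  canon S (canon S x) = canon S x.
Proof. by apply: canon_eq; apply: spBC; apply: canon_spec. Qed.

Definition Q (K : pzRingType) (A : lmodType K) (S : subsp A) :=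
  {x : A | canon S x == x}.

Section QDef.
Variables (K : pzRingType) (A : lmodType K) (S : subsp A).
Definition qpi (x : A) : Q S := exist _ (canon S x) (introT eqP (canon_canon S x)).
Lemma qpiE x y : S (x - y) -> qpi x = qpi y.
Proof. move=> h; apply: val_inj => /=; exact: canon_eq. Qed.
Lemma qpi_val (q : Q S) : qpi (val q) = q.
Proof. by apply: val_inj => /=; apply/eqP; case: q. Qed.
Lemma val_qpi x : S (val (qpi x) - x).
Proof. by apply: spBC; apply: canon_spec. Qed.
Lemma qpi_eq0 x : S x -> qpi x = qpi 0.
Proof. by move=> h; apply: qpiE; rewrite subr0. Qed.

Definition qadd (a b : Q S) := qpi (val a + val b).
Definition qopp (a : Q S) := qpi (- val a).
Definition qzero := qpi 0.
Definition qscale (k : K) (a : Q S) := qpi (k *: val a).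

Lemma qpiD x y : qadd (qpi x) (qpi y) = qpi (x + y).
Proof.
apply: qpiE; rewrite opprD addrACA; apply: spA; exact: val_qpi.
Qed.
Lemma qpiN x : qopp (qpi x) = qpi (- x).
Proof. apply: qpiE; rewrite -opprD; apply: spN; exact: val_qpi. Qed.
Lemma qpiZ k x : qscale k (qpi x) = qpi (k *: x).
Proof. apply: qpiE; rewrite -scalerBr; apply: spZ; exact: val_qpi. Qed.

Lemma qind (P : Q S -> Prop) : (forall x, P (qpi x)) -> forall q, P q.
Proof. by move=> h q; rewrite -(qpi_val q). Qed.

Lemma qaddA : associative qadd.
Proof. by elim/qind => x; elim/qind => y; elim/qind => z; rewrite !qpiD addrA. Qed.
Lemma qaddC : commutative qadd.
Proof. by elim/qind => x; elim/qind => y; rewrite !qpiD addrC. Qed.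
Lemma qadd0 : left_id qzero qadd.
Proof. by elim/qind => x; rewrite /qzero qpiD add0r. Qed.
Lemma qaddN : left_inverse qzero qopp qadd.
Proof. by elim/qind => x; rewrite qpiN qpiD addNr. Qed.

HB.instance Definition _ := Choice.copy (Q S) {x : A | canon S x == x}.
HB.instance Definition _ := GRing.isZmodule.Build (Q S) qaddA qaddC qadd0 qaddN.

Lemma qscaleA a b v : qscale a (qscale b v) = qscale (a * b) v.
Proof. by elim/qind: v => x; rewrite !qpiZ scalerA. Qed.
Lemma qscale1 : left_id 1 qscale.
Proof. by elim/qind => x; rewrite qpiZ scale1r. Qed.
Lemma qscaleDr : right_distributive qscale +%R.
Proof. move=> k; elim/qind => x; elim/qind => y.
change (qscale k (qadd (qpi x) (qpi y)) = qadd (qscale k (qpi x)) (qscale k (qpi y))).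
by rewrite qpiD !qpiZ qpiD scalerDr. Qed.
Lemma qscaleDl v : {morph qscale^~ v: a b / a + b}.
Proof. elim/qind: v => x a b /=.
change (qscale (a + b) (qpi x) = qadd (qscale a (qpi x)) (qscale b (qpi x))).
by rewrite !qpiZ qpiD scalerDl. Qed.

HB.instance Definition _ := GRing.Zmodule_isLmodule.Build K (Q S) qscaleA qscale1 qscaleDr qscaleDl.

Lemma qpi_lin k x y : qpi (k *: x + y) = k *: qpi x + qpi y.
Proof. by change (qpi (k *: x + y) = qadd (qscale k (qpi x)) (qpi y)); rewrite qpiZ qpiD. Qed.
Lemma qpi0 : qpi 0 = 0.
Proof. by []. Qed.
End QDef.

Definition upd (T : Type) (env : nat -> T) (j : nat) (x : T) : nat -> T :=
  fun i => if i == j then x else env i.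

Section Trees.
Variable L : Type.
Implicit Types (t : tm L) (u w : nat -> tm L).

Lemma leaves_tsubst u t : leaves (tsubst u t) = flatten [seq leaves (u i) | i <- leaves t].
Proof. by elim: t => [i|a l IHl r IHr] /=; rewrite ?cats0 // IHl IHr map_cat flatten_cat. Qed.

Lemma eq_tsubst u w t : {in leaves t, u =1 w} -> tsubst u t = tsubst w t.
Proof.
elim: t => [i|a l IHl r IHr] /= h; first by apply: h; rewrite inE.
by rewrite IHl ?IHr // => i hi; apply: h; rewrite mem_cat hi ?orbT.
Qed.

Lemma tsubst_id u t : {in leaves t, forall i, u i = Leaf i} -> tsubst u t = t.
Proof.
elim: t => [i|a l IHl r IHr] /= h; first by apply: h; rewrite inE.
by rewrite IHl ?IHr // => i hi; apply: h; rewrite mem_cat hi ?orbT.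
Qed.

Lemma leaves_tmap (L' : Type) (f : L -> L') t : leaves (tmap f t) = leaves t.
Proof. by elim: t => [i|a l IHl r IHr] //=; rewrite IHl IHr. Qed.

Lemma tmap_tsubst (L' : Type) (f : L -> L') u t :
  tmap f (tsubst u t) = tsubst (fun i => tmap f (u i)) (tmap f t).
Proof. by elim: t => [i|a l IHl r IHr] //=; rewrite IHl IHr. Qed.

Lemma labels_ok_tsubst (P : pred L) u t :
  labels_ok P t -> (forall i, labels_ok P (u i)) -> labels_ok P (tsubst u t).
Proof.
move=> + hu; elim: t => [i|a l IHl r IHr] //= /and3P [-> hl hr].
by rewrite IHl ?IHr.
Qed.

Lemma ctx_exists j t : count_mem j (leaves t) = 1%N ->
  exists C : ctx L, forall X, tsubst (fun i => if i == j then X else Leaf i) t = plug C X.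
Proof.
elim: t => [i|a l IHl r IHr] /=.
  rewrite addn0 => /eqP; rewrite eqb1 => /eqP ->.
  by exists Hole => X; rewrite eqxx.
rewrite count_cat => hc.
have : (count_mem j (leaves l) == 1%N) || (count_mem j (leaves r) == 1%N).
  by move: hc; case: (count_mem j _) => [|[|]] //=; case: (count_mem j _) => [|[|]].
case/orP => /eqP h1.
- have h0 : count_mem j (leaves r) = 0%N by move: hc; rewrite h1 => -[].
  have [C HC] := IHl h1; exists (CtxL a C r) => X /=; rewrite HC tsubst_id //.
  move=> i hi; case: eqP => // eij; move/count_memPn: h0.
  by rewrite -eij hi.
- have h0 : count_mem j (leaves l) = 0%N by move: hc; rewrite h1 addn1 => -[].
  have [C HC] := IHr h1; exists (CtxR a l C) => X /=; rewrite HC tsubst_id //.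
  move=> i hi; case: eqP => // eij; move/count_memPn: h0.
  by rewrite -eij hi.
Qed.

Lemma perm_ext n m j t w : perm_eq (leaves t) (iota 0 n) -> (j < n)%N ->
  (forall i, i != j -> w i = Leaf i) -> perm_eq (leaves (w j)) (j :: iota n m) ->
  perm_eq (leaves (tsubst w t)) (iota 0 (n + m)).
Proof.
move=> hp hj hw hwj.
have jin : j \in leaves t by rewrite (perm_mem hp) mem_iota.
have hu : uniq (leaves t) by rewrite (perm_uniq hp) iota_uniq.
rewrite leaves_tsubst.
move: hp hu; case/splitPr: jin => s1 s2 hp hu.
have hs1 : j \notin s1 by move: hu; rewrite cat_uniq /= => /and3P[_ /norP[] ].
have hs2 : j \notin s2 by move: hu; rewrite cat_uniq /= => /and3P[_ _ /andP[] ].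
have fl (s : seq nat) : j \notin s -> flatten [seq leaves (w i) | i <- s] = s.
  elim: s => [|x s IH] //=; rewrite inE negb_or => /andP[hx hs].
  by rewrite IH // hw // eq_sym.
rewrite map_cat flatten_cat /= fl // fl //.
rewrite iotaD add0n.
apply: (@perm_trans _ ((s1 ++ j :: s2) ++ iota n m)); last by rewrite perm_cat2r.
rewrite -catA perm_cat2l.
apply: (@perm_trans _ ((j :: iota n m) ++ s2)); first by rewrite perm_cat2r.
by rewrite /= perm_cons perm_catC.
Qed.

End Trees.

Section Marked.
Variable V : Type.
Implicit Types (t : tm ((bool * bool) * V)).

Lemma marked_tsubst u t : marked (tsubst u t) = flatten [seq marked (u i) | i <- marked t].
Proof.
elim: t => [i|a l IHl r IHr] /=; first by rewrite cats0.
by case: a.1.1; case: a.1.2; rewrite /= ?IHl ?IHr ?map_cat ?flatten_cat ?cats0.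
Qed.

Lemma marked_sub_leaves t : {subset marked t <= leaves t}.
Proof.
elim: t => [i|a l IHl r IHr] //= x.
rewrite !mem_cat; case: a.1.1; case: a.1.2; rewrite /= ?in_nil ?orbF //.
- by case/orP => [/IHl|/IHr] ->; rewrite ?orbT.
- by move/IHl ->.
- by move/IHr ->; rewrite orbT.
Qed.

Lemma marked_tsubst_id j u t : j \notin marked t -> (forall i, i != j -> u i = Leaf i) ->
  marked (tsubst u t) = marked t.
Proof.
move=> hj hu; rewrite marked_tsubst.
elim: (marked t) hj => [|x s IH] //=; rewrite inE negb_or => /andP[hx hs].
by rewrite IH // hu // eq_sym.
Qed.
End Marked.

Section Eval.
Variables (K : pzRingType) (A : lmodType K) (L : Type) (op : L -> A -> A -> A).

Lemma teval_tsubst env u t :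
  teval op env (tsubst u t) = teval op (fun i => teval op env (u i)) t.
Proof. by elim: t => [i|a l IHl r IHr] //=; rewrite IHl IHr. Qed.

Lemma eq_teval env1 env2 t : {in leaves t, env1 =1 env2} -> teval op env1 t = teval op env2 t.
Proof.
elim: t => [i|a l IHl r IHr] /= h; first by apply: h; rewrite inE.
by rewrite IHl ?IHr // => i hi; apply: h; rewrite mem_cat hi ?orbT.
Qed.

Variable P : pred L.
Hypothesis opl : forall a, P a -> forall k x x' y, op a (k *: x + x') y = k *: op a x y + op a x' y.
Hypothesis opr : forall a, P a -> forall x k y y', op a x (k *: y + y') = k *: op a x y + op a x y'.

Lemma teval_upd_out env j x t : j \notin leaves t -> teval op (upd env j x) t = teval op env t.
Proof. by move=> h; apply: eq_teval => i hi; rewrite /upd; case: eqP => // e; rewrite -e hi in h. Qed.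

Lemma teval_upd_lin env j t k x y : labels_ok P t -> count_mem j (leaves t) = 1%N ->
  teval op (upd env j (k *: x + y)) t =
  k *: teval op (upd env j x) t + teval op (upd env j y) t.
Proof.
elim: t => [i|a l IHl r IHr] /=.
  by rewrite addn0 => _ /eqP; rewrite eqb1 /upd => ->.
case/and3P => Pa hl hr; rewrite count_cat => hc.
have : (count_mem j (leaves l) == 1%N) || (count_mem j (leaves r) == 1%N).
  by move: hc; case: (count_mem j _) => [|[|]] //=; case: (count_mem j _) => [|[|]].
have nin s : count_mem j s = 0%N -> j \notin s.
  by move/count_memPn.
case/orP => /eqP h1.
- have h0 : count_mem j (leaves r) = 0%N by move: hc; rewrite h1 => -[].
  by rewrite IHl // !(teval_upd_out _ _ (nin _ h0)) opl.
- have h0 : count_mem j (leaves l) = 0%N by move: hc; rewrite h1 addn1 => -[].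
  by rewrite IHr // !(teval_upd_out _ _ (nin _ h0)) opr.
Qed.

Lemma teval_upd0 env j t : labels_ok P t -> count_mem j (leaves t) = 1%N ->
  teval op (upd env j 0) t = 0.
Proof.
move=> h1 h2; have := teval_upd_lin env 1 0 0 h1 h2.
rewrite !scale1r addr0 => /(congr1 (fun z => z - teval op (upd env j 0) t)).
by rewrite subrr addrK => <-.
Qed.

Lemma teval_upd_sum env j t (I : Type) (s : seq I) (k : I -> K) (x : I -> A) :
  labels_ok P t -> count_mem j (leaves t) = 1%N ->
  teval op (upd env j (\sum_(i <- s) k i *: x i)) t =
  \sum_(i <- s) k i *: teval op (upd env j (x i)) t.
Proof.
move=> h1 h2; elim: s => [|a s IH]; first by rewrite !big_nil teval_upd0.
by rewrite !big_cons teval_upd_lin // IH.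
Qed.

Lemma teval_upd_sub env j t x y : labels_ok P t -> count_mem j (leaves t) = 1%N ->
  teval op (upd env j (x - y)) t = teval op (upd env j x) t - teval op (upd env j y) t.
Proof.
move=> h1 h2.
have -> : x - y = 1 *: x + ((-1) *: y + 0) by rewrite scale1r addr0 scaleN1r.
by rewrite teval_upd_lin // teval_upd_lin // teval_upd0 // scale1r addr0 scaleN1r.
Qed.
End Eval.

Section Zb.
Variables (K : pzRingType) (A : lmodType K).
Implicit Types (F G : int -> int -> A).

Definition zb F := exists N, forall s t, iter N (@mul_wz K A) F s t = 0.

Lemma iter_ext F G : (forall s t, F s t = G s t) ->
  forall N s t, iter N (@mul_wz K A) F s t = iter N (@mul_wz K A) G s t.
Proof.
move=> h; elim=> [|N IH] s t //=; by rewrite /mul_wz !IH.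
Qed.

Lemma iter_zero F : (forall s t, F s t = 0) -> forall N s t, iter N (@mul_wz K A) F s t = 0.
Proof. move=> h; elim=> [|N IH] s t //=; by rewrite /mul_wz !IH subrr. Qed.

Lemma iter_add F G N s t : iter N (@mul_wz K A) (fun s t => F s t + G s t) s t =
  iter N (@mul_wz K A) F s t + iter N (@mul_wz K A) G s t.
Proof.
elim: N s t => [|N IH] s t //=; by rewrite /mul_wz !IH opprD addrACA.
Qed.

Lemma iter_sub F G N s t : iter N (@mul_wz K A) (fun s t => F s t - G s t) s t =
  iter N (@mul_wz K A) F s t - iter N (@mul_wz K A) G s t.
Proof.
elim: N s t => [|N IH] s t //=; rewrite /mul_wz !IH !opprB addrACA [RHS]addrACA.
by congr (_ + _); rewrite addrC.
Qed.

Lemma iter_sum (I : Type) (l : seq I) (P : pred I) (F : I -> int -> int -> A) N s t :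
  iter N (@mul_wz K A) (fun s t => \sum_(i <- l | P i) F i s t) s t =
  \sum_(i <- l | P i) iter N (@mul_wz K A) (F i) s t.
Proof.
elim: l s t => [|a l IH] s t.
  by rewrite big_nil; apply: iter_zero => ? ?; rewrite big_nil.
rewrite big_cons; case Pa: (P a).
  rewrite (iter_ext (G := fun s t => F a s t + \sum_(i <- l | P i) F i s t)); last by move=> ? ?; rewrite big_cons Pa.
  by rewrite iter_add IH.
rewrite (iter_ext (G := fun s t => \sum_(i <- l | P i) F i s t)); last by move=> ? ?; rewrite big_cons Pa.
by rewrite IH.
Qed.

Lemma iter_map (B : lmodType K) (f : A -> B) (hf : forall x y, f (x - y) = f x - f y) F N s t :
  f (iter N (@mul_wz K A) F s t) = iter N (@mul_wz K B) (fun s t => f (F s t)) s t.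
Proof. elim: N s t => [|N IH] s t //=; by rewrite /mul_wz hf !IH. Qed.

Lemma iter_mono F N : (forall s t, iter N (@mul_wz K A) F s t = 0) ->
  forall M s t, iter (M + N) (@mul_wz K A) F s t = 0.
Proof.
move=> h M s t; rewrite iterD.
have := @iter_zero (iter N (@mul_wz K A) F) h M s t; by [].
Qed.

Lemma zb_ext F G : (forall s t, F s t = G s t) -> zb F -> zb G.
Proof. by move=> h [N HN]; exists N => s t; rewrite -(iter_ext h). Qed.

Lemma zb_0 F : (forall s t, F s t = 0) -> zb F.
Proof. by move=> h; exists 0%N. Qed.

Lemma zb_add F G : zb F -> zb G -> zb (fun s t => F s t + G s t).
Proof.
move=> [N1 h1] [N2 h2]; exists (N1 + N2)%N => s t; rewrite iter_add.
by rewrite addnC (iter_mono h1) addnC (iter_mono h2) addr0.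
Qed.

Lemma zb_sum (I : Type) (l : seq I) (P : pred I) (F : I -> int -> int -> A) :
  (forall i, P i -> zb (F i)) -> zb (fun s t => \sum_(i <- l | P i) F i s t).
Proof.
move=> h; elim: l => [|a l IH].
  by apply: zb_0 => ? ?; rewrite big_nil.
case Pa: (P a).
  apply: zb_ext (zb_add (h a Pa) IH) => s t; by rewrite big_cons Pa.
apply: zb_ext IH => s t; by rewrite big_cons Pa.
Qed.

Lemma local_zb (op : A -> A -> A) a b : local_op op a b <-> zb (dprod op a b).
Proof. by []. Qed.
End Zb.

Lemma zb_map (K : pzRingType) (A B : lmodType K) (f : A -> B) (hf : forall x y, f (x - y) = f x - f y) (F : int -> int -> A) :
  zb F -> zb (fun s t => f (F s t)).
Proof. by move=> [N h]; exists N => s t; rewrite -iter_map // h -[0](subrr 0) hf subrr. Qed.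


Section LinF.
Variables (K : pzRingType) (U W : lmodType K) (f : U -> W).
Hypothesis hf : forall k x y, f (k *: x + y) = k *: f x + f y.
Lemma lf0 : f 0 = 0.
Proof.
have := hf 1 0 0; rewrite !scale1r addr0 => /(congr1 (fun z => z - f 0)).
by rewrite subrr addrK => <-.
Qed.
Lemma lfD x y : f (x + y) = f x + f y.
Proof. by rewrite -{1}[x]scale1r hf scale1r. Qed.
Lemma lfZ k x : f (k *: x) = k *: f x.
Proof. by rewrite -[k *: x]addr0 hf lf0 addr0. Qed.
Lemma lfN x : f (- x) = - f x.
Proof. by rewrite -scaleN1r lfZ scaleN1r. Qed.
Lemma lfB x y : f (x - y) = f x - f y.
Proof. by rewrite lfD lfN. Qed.
Lemma lf_sum (I : Type) (s : seq I) (P : pred I) (F : I -> U) :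
  f (\sum_(i <- s | P i) F i) = \sum_(i <- s | P i) f (F i).
Proof.
elim: s => [|a s IH]; first by rewrite !big_nil lf0.
by rewrite !big_cons; case: (P a); rewrite ?lfD IH.
Qed.
End LinF.

Definition allL (V : Type) (t : tm V) : tm ((bool * bool) * V) :=
  tmap (fun v => ((false, true), v)) t.

Lemma tmap_comp (L1 L2 L3 : Type) (f : L1 -> L2) (g : L2 -> L3) t :
  tmap g (tmap f t) = tmap (fun a => g (f a)) t.
Proof. by elim: t => [i|a l IHl r IHr] //=; rewrite IHl IHr. Qed.

Lemma tmap_id (L1 : Type) (t : tm L1) : tmap (fun a => a) t = t.
Proof. by elim: t => [i|a l IHl r IHr] //=; rewrite IHl IHr. Qed.

Lemma cnt1 (L : Type) n (t : tm L) j : perm_eq (leaves t) (iota 0 n) -> (j < n)%N ->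
  count_mem j (leaves t) = 1%N.
Proof. by move=> hp hj; rewrite (permP hp) count_uniq_mem ?iota_uniq // mem_iota hj. Qed.

Section Main.
Variables (mk : pred (bool * bool)) (K : fieldType) (V : vectType K) (tau : V -> V)
  (R : fsum K V -> Prop).
Hypothesis HR : quadratic_rel R.
Hypotheses (mkTF : mk (true, false)) (mkFT : mk (false, true)).
Variables (A : lmodType K) (op : bool * bool -> V -> A -> A -> A).
Hypothesis Hop : Had_alg mk tau R op.

Local Notation L2 := ((bool * bool) * V)%type.
Definition opE : L2 -> A -> A -> A := fun a => op a.1 a.2.
Local Notation okL := (fun a : L2 => mk a.1).

Lemma op_tri s : mk s -> trilin (op s). Proof. by case: Hop => h _ _; apply: h. Qed.
Lemma op_l s v b : mk s -> forall k x y, op s v (k *: x + y) b = k *: op s v x b + op s v y b.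
Proof. by move=> /op_tri [_ h _] k x y; apply: h. Qed.
Lemma op_r s v a : mk s -> forall k x y, op s v a (k *: x + y) = k *: op s v a x + op s v a y.
Proof. by move=> /op_tri [_ _ h] k x y; apply: h. Qed.
Lemma op_v s a b : mk s -> forall k x y, op s (k *: x + y) a b = k *: op s x a b + op s y a b.
Proof. by move=> /op_tri [h _ _] k x y; apply: h. Qed.
Lemma op_sym s v a b : mk s -> op (swap2 s) (tau v) a b = op s v b a.
Proof. by case: Hop => _ h _; apply: h. Qed.

Lemma opE_l a : okL a -> forall k x x' y, opE a (k *: x + x') y = k *: opE a x y + opE a x' y.
Proof. by move=> h k x x' y; apply: op_l. Qed.
Lemma opE_r a : okL a -> forall x k y y', opE a x (k *: y + y') = k *: opE a x y + opE a x y'.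
Proof. by move=> h x k y y'; apply: op_r. Qed.

Definition Iset (x : A) : Prop := forall n (t : tm L2) j (env : nat -> A),
  labels_ok okL t -> perm_eq (leaves t) (iota 0 n) -> (j < n)%N -> j \notin marked t ->
  teval opE (upd env j x) t = 0.

Lemma Iset0 : Iset 0.
Proof. move=> n t j env hl hp hj _; apply: (teval_upd0 opE_l opE_r) => //; exact: cnt1 hp hj. Qed.

Lemma IsetD k x y : Iset x -> Iset y -> Iset (k *: x + y).
Proof.
move=> hx hy n t j env hl hp hj hm.
by rewrite (teval_upd_lin opE_l opE_r) // ?(cnt1 hp hj) // (hx n) // (hy n) // scaler0 addr0.
Qed.

Definition Isp : subsp A := Subsp Iset0 IsetD.

Lemma test_subst n t j env W env2 : perm_eq (leaves t) (iota 0 n) ->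
  (forall i, (i < n)%N -> i != j -> env2 i = env i) ->
  teval opE env2 (tsubst (fun i => if i == j then W else Leaf i) t) =
  teval opE (upd env j (teval opE env2 W)) t.
Proof.
move=> hp he; rewrite teval_tsubst; apply: eq_teval => i hi.
have hin : (i < n)%N by move: hi; rewrite (perm_mem hp) mem_iota.
rewrite /upd; case: eqP => [//|/eqP nij] /=; exact: he.
Qed.

Lemma I_ext x n t j env W m env2 : Iset x -> labels_ok okL t ->
  perm_eq (leaves t) (iota 0 n) -> (j < n)%N -> j \notin marked t ->
  labels_ok okL W -> perm_eq (leaves W) (j :: iota n m) ->
  (forall i, (i < n)%N -> i != j -> env2 i = env i) ->
  teval opE (upd env j (teval opE (upd env2 j x) W)) t = 0.
Proof.
move=> hx hl hp hj hm hW hpW he.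
rewrite -(@test_subst n t j env W (upd env2 j x)) //; last first.
  by move=> i hi nij; rewrite /upd (negbTE nij) he.
apply: (hx (n + m)%N) => //.
- by apply: labels_ok_tsubst => // i; case: (i == j).
- by apply: perm_ext hp hj _ _ => [i /negbTE ->|]; rewrite ?eqxx.
- by rewrite ltn_addr.
- by rewrite (marked_tsubst_id hm) // => i /negbTE ->.
Qed.

Lemma I1a x v b : Iset x -> op (false, true) v x b = 0.
Proof.
move=> hx; have := hx 2%N (Node ((false, true), v) (Leaf 0%N) (Leaf 1%N)) 0%N (fun _ => b).
by apply => //=; rewrite mkFT.
Qed.

Lemma I1b x v b : Iset x -> op (true, false) v b x = 0.
Proof.
move=> hx; have := hx 2%N (Node ((true, false), v) (Leaf 0%N) (Leaf 1%N)) 1%N (fun _ => b).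
by apply => //=; rewrite mkTF.
Qed.

Lemma I2 s v x y : mk s -> Iset x -> Iset (op s v x y) /\ Iset (op s v y x).
Proof.
move=> hs hx; split => n t j env hl hp hj hm.
- have := @I_ext x n t j env (Node (s, v) (Leaf j) (Leaf n)) 1 (upd env n y) hx hl hp hj hm.
  have -> : teval opE (upd (upd env n y) j x) (Node (s, v) (Leaf j) (Leaf n)) = op s v x y.
    by rewrite /= /opE /upd /= eqxx (gtn_eqF hj) eqxx.
  apply => //=.
  + by rewrite hs.
  + by move=> i hi _; rewrite /upd (ltn_eqF hi).
- have := @I_ext x n t j env (Node (s, v) (Leaf n) (Leaf j)) 1 (upd env n y) hx hl hp hj hm.
  have -> : teval opE (upd (upd env n y) j x) (Node (s, v) (Leaf n) (Leaf j)) = op s v y x.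
    by rewrite /= /opE /upd /= eqxx (gtn_eqF hj) eqxx.
  apply => //=.
  + by rewrite hs.
  + by apply/permP => p /=; rewrite !addn0 addnC.
  + by move=> i hi _; rewrite /upd (ltn_eqF hi).
Qed.

Lemma pideal_zero (u : tm V) : pideal tau R [:: (1, u); (-1, u)].
Proof.
apply: (@pideal_ext _ _ tau R [::]); first exact: pideal_nil.
move=> t; rewrite /coef !big_cons big_nil /=.
by case: (u == t); rewrite ?addr0 ?subrr.
Qed.

Lemma HadA n t1 t2 env : labels_ok okL t1 -> labels_ok okL t2 ->
  perm_eq (leaves t1) (iota 0 n) -> perm_eq (leaves t2) (iota 0 n) ->
  marked t1 = marked t2 -> tmap snd t1 = tmap snd t2 ->
  teval opE env t1 = teval opE env t2.
Proof.
move=> hl1 hl2 hp1 hp2 hm ht.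
case: Hop => _ _ /(_ n [:: (1, t1); (-1, t2)]) h.
have : peval opE env [:: (1, t1); (-1, t2)] = 0.
  apply: h; first by rewrite /= hl1 hl2 hp1 hp2.
  move=> T; rewrite /proj_mark /= hm; case: (perm_eq _ T) => /=; last exact: pideal_nil.
  by rewrite ht; apply: pideal_zero.
rewrite /peval !big_cons big_nil /= scale1r scaleN1r addr0 => /eqP.
by rewrite subr_eq0 => /eqP.
Qed.

Lemma HadR n (r : fsum K V) (g : tm V -> tm L2) M env :
  (forall p, p \in r -> labels_ok okL (g p.2) && perm_eq (leaves (g p.2)) (iota 0 n)) ->
  (forall p, p \in r -> perm_eq (marked (g p.2)) M) ->
  pideal tau R [seq (p.1, tmap snd (g p.2)) | p <- r] ->
  peval opE env [seq (p.1, g p.2) | p <- r] = 0.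
Proof.
move=> h1 h2 h3; case: Hop => _ _ /(_ n [seq (p.1, g p.2) | p <- r]) h.
apply: h.
  by rewrite all_map; apply/allP => p hp /=; apply: h1.
move=> T; rewrite /proj_mark.
case hMT: (perm_eq M T).
- rewrite (@eq_in_filter _ _ predT); first by rewrite filter_predT -map_comp.
  move=> q /mapP [p hp ->] /=; by rewrite ((permPl (h2 p hp)) T) hMT.
- rewrite (@eq_in_filter _ _ pred0); first by rewrite filter_pred0; exact: pideal_nil.
  move=> q /mapP [p hp ->] /=; by rewrite ((permPl (h2 p hp)) T) hMT.
Qed.


Lemma labels_allL (q : tm V) : labels_ok okL (allL q).
Proof. by elim: q => [i|a l IHl r IHr] //=; rewrite mkFT IHl IHr. Qed.

Lemma flat_leaf (L : Type) (g : nat -> nat) (s : seq nat) :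
  flatten [seq leaves (Leaf (g i) : tm L) | i <- s] = map g s.
Proof. by elim: s => [|a s IH] //=; rewrite IH. Qed.

Lemma I3 s v x y : mk s -> Iset (op s v x y - op (false, true) v x y).
Proof.
move=> hs n t j env hl hp hj hm.
rewrite (teval_upd_sub opE_l opE_r) // ?(cnt1 hp hj) //.
set env2 := upd (upd env n y) j x.
have he : forall i, (i < n)%N -> i != j -> env2 i = env i.
  by move=> i hi nij; rewrite /env2 /upd (negbTE nij) (ltn_eqF hi).
set W1 := Node (s, v) (Leaf j) (Leaf n).
set W2 := Node ((false, true), v) (Leaf j) (Leaf n).
have e1 : op s v x y = teval opE env2 W1.
  by rewrite /= /opE /env2 /upd /= eqxx (gtn_eqF hj) eqxx.
have e2 : op (false, true) v x y = teval opE env2 W2.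
  by rewrite /= /opE /env2 /upd /= eqxx (gtn_eqF hj) eqxx.
rewrite e1 e2 -(@test_subst n t j env W1 env2 hp he) -(@test_subst n t j env W2 env2 hp he).
apply/eqP; rewrite subr_eq0; apply/eqP.
apply: (@HadA (n + 1)%N).
- by apply: labels_ok_tsubst => // i; case: (i == j); rewrite /= ?hs.
- by apply: labels_ok_tsubst => // i; case: (i == j); rewrite /= ?mkFT.
- by apply: perm_ext hp hj _ _ => [i /negbTE ->|]; rewrite ?eqxx.
- by apply: perm_ext hp hj _ _ => [i /negbTE ->|]; rewrite ?eqxx.
- by rewrite !(marked_tsubst_id hm) // => i /negbTE ->.
- by rewrite !tmap_tsubst; apply: eq_tsubst => i _; case: (i == j).
Qed.

Lemma I4 r env0 : R r -> Iset (peval opE env0 [seq (p.1, allL p.2) | p <- r]).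
Proof.
move=> hr n t j env hl hp hj hm.
rewrite /peval big_map.
rewrite (@teval_upd_sum _ _ _ _ okL opE_l opE_r env j t _ r (fun p => p.1)
   (fun p => teval opE env0 (allL p.2))) // ?(cnt1 hp hj) //.
pose ug i := if i == 0%N then j else if i == 1%N then n else n.+1.
pose u' i : tm L2 := Leaf (ug i).
pose env2 := upd (upd (upd env n (env0 1%N)) n.+1 (env0 2%N)) j (env0 0%N).
have hjn1 : (j < n.+1)%N by apply: ltn_trans hj _.
have he : forall i, (i < n)%N -> i != j -> env2 i = env i.
  move=> i hi nij; rewrite /env2 /upd (negbTE nij) (ltn_eqF hi).
  by rewrite (ltn_eqF (ltn_trans hi (ltnSn n))).
have hrl := HR hr.
have hW : forall q : tm V, perm_eq (leaves q) [:: 0; 1; 2]%N ->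
    teval opE env2 (tsubst u' (allL q)) = teval opE env0 (allL q).
  move=> q hq; rewrite teval_tsubst; apply: eq_teval => i.
  rewrite leaves_tmap (perm_mem hq) !inE => /or3P [] /eqP -> /=;
  rewrite /u' /ug /env2 /upd /= ?eqxx ?(gtn_eqF hj) ?(gtn_eqF hjn1) //.
  by rewrite (ltn_eqF (ltnSn n)).
pose G q := tsubst (fun i => if i == j then tsubst u' (allL q) else Leaf i) t.
have -> : \sum_(p <- r) p.1 *: teval opE (upd env j (teval opE env0 (allL p.2))) t =
          \sum_(p <- r) p.1 *: teval opE env2 (G p.2).
  apply: eq_big_seq => p hpr; rewrite /G (test_subst _ hp he) hW //.
  by move/allP: hrl => /(_ p hpr).
have := @HadR (n + 2)%N r G (marked t) env2.
rewrite /peval big_map; apply.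
- move=> p hpr; apply/andP; split.
    apply: labels_ok_tsubst => // i; case: (i == j) => //.
    by apply: labels_ok_tsubst; [exact: labels_allL | ].
  apply: perm_ext hp hj _ _ => [i /negbTE ->|] //; rewrite eqxx.
  rewrite leaves_tsubst leaves_tmap flat_leaf.
  have /allP /(_ p hpr) hq := hrl.
  by apply: (perm_trans (perm_map ug hq)); rewrite /ug /=.
- by move=> p _; rewrite /G (marked_tsubst_id hm) // => i /negbTE ->.
- have hc : count_mem j (leaves (tmap snd t)) = 1%N by rewrite leaves_tmap (cnt1 hp hj).
  have [C HC] := ctx_exists hc.
  have -> : [seq (p.1, tmap snd (G p.2)) | p <- r] =
            [seq (p.1, plug C (tsubst (fun i => Leaf (ug i)) p.2)) | p <- r].
    apply: eq_map => p; rewrite /G tmap_tsubst -HC; congr (_, _).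
    apply: eq_tsubst => i _; case: (i == j) => //.
    by rewrite tmap_tsubst /allL tmap_comp tmap_id.
  by apply: pideal_gen; apply: pgen_rel.
Qed.


Definition B := Q Isp.
Definition Hat := (B * A)%type.

Lemma Iv0 : Iset (val (0 : B)).
Proof. by have := val_qpi Isp 0; rewrite subr0. Qed.

Lemma valL k (q q' : B) : Iset (val (k *: q + q') - (k *: val q + val q')).
Proof.
have -> : k *: q + q' = qpi Isp (k *: val q + val q') by rewrite qpi_lin !qpi_val.
exact: (val_qpi Isp).
Qed.

Lemma opFT_l v b x y : Iset (x - y) -> op (false, true) v x b = op (false, true) v y b.
Proof.
move=> h; apply/eqP; rewrite -subr_eq0 -(lfB (op_l v b mkFT)); apply/eqP; exact: I1a.
Qed.
Lemma opTF_r v b x y : Iset (x - y) -> op (true, false) v b x = op (true, false) v b y.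
Proof.
move=> h; apply/eqP; rewrite -subr_eq0 -(lfB (op_r v b mkTF)); apply/eqP; exact: I1b.
Qed.

Lemma qop v x x' y y' : Iset (x - x') -> Iset (y - y') ->
  qpi Isp (op (false, true) v x y) = qpi Isp (op (false, true) v x' y').
Proof.
move=> hx hy; apply: qpiE => /=.
rewrite -(subrKA (op (false, true) v x' y)).
apply: (spA (S := Isp)).
  by rewrite -(lfB (op_l v y mkFT)); case: (I2 v y mkFT hx).
by rewrite -(lfB (op_r v x' mkFT)); case: (I2 v x' mkFT hy).
Qed.

Definition opT v (a b : A) : A := if mk (true, true) then op (true, true) v a b else 0.
Definition opB v (q1 q2 : B) : B := qpi Isp (op (false, true) v (val q1) (val q2)).
Definition opH v (x y : Hat) : Hat :=
  (opB v x.1 y.1,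
   op (false, true) v (val x.1) y.2 + op (true, false) v x.2 (val y.1) + opT v x.2 y.2).

Lemma opT_l v b k x y : opT v (k *: x + y) b = k *: opT v x b + opT v y b.
Proof. by rewrite /opT; case: ifP => h; rewrite ?op_l ?scaler0 ?addr0. Qed.
Lemma opT_r v b k x y : opT v b (k *: x + y) = k *: opT v b x + opT v b y.
Proof. by rewrite /opT; case: ifP => h; rewrite ?op_r ?scaler0 ?addr0. Qed.
Lemma opT_v a b k x y : opT (k *: x + y) a b = k *: opT x a b + opT y a b.
Proof. by rewrite /opT; case: ifP => h; rewrite ?op_v ?scaler0 ?addr0. Qed.

Lemma Hat_scale k (x : Hat) : k *: x = (k *: x.1, k *: x.2).
Proof. by []. Qed.
Lemma Hat_add (x y : Hat) : x + y = (x.1 + y.1, x.2 + y.2).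
Proof. by []. Qed.

Lemma sum3 (x1 y1 x2 y2 x3 y3 : A) :
  (x1 + y1) + (x2 + y2) + (x3 + y3) = (x1 + x2 + x3) + (y1 + y2 + y3).
Proof. by rewrite (addrACA x1) (addrACA (x1 + x2)). Qed.

Lemma opH_tri : trilin opH.
Proof.
split.
- move=> k v v' [q1 a1] [q2 a2]; rewrite !Hat_add !Hat_scale /opH /opB /=; congr (_, _).
    by rewrite op_v // qpi_lin.
  by rewrite !op_v // opT_v sum3 !scalerDr.
- move=> v k [q1 a1] [q1' a1'] [q2 a2]; rewrite !Hat_add !Hat_scale /opH /opB /=; congr (_, _).
    rewrite -qpi_lin -op_l //; apply: qop; last by rewrite subrr; exact: Iset0.
    exact: valL.
  rewrite (opFT_l v a2 (valL k q1 q1')) op_l // op_l // opT_l.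
  by rewrite sum3 !scalerDr.
- move=> v [q1 a1] k [q2 a2] [q2' a2']; rewrite !Hat_add !Hat_scale /opH /opB /=; congr (_, _).
    rewrite -qpi_lin -op_r //; apply: qop; first by rewrite subrr; exact: Iset0.
    exact: valL.
  rewrite (opTF_r v a1 (valL k q2 q2')) op_r // op_r // opT_r.
  by rewrite sum3 !scalerDr.
Qed.


Lemma opH_sym v x y : opH (tau v) x y = opH v y x.
Proof.
case: x => q1 a1; case: y => q2 a2; rewrite /opH /opB /=; congr (_, _).
  have := op_sym v (val q1) (val q2) mkTF => /= ->.
  apply: qpiE; exact: I3.
have := op_sym v (val q1) a2 mkTF => /= ->.
have := op_sym v a1 (val q2) mkFT => /= ->.
have -> : opT (tau v) a1 a2 = opT v a2 a1.
  rewrite /opT; case: ifP => // h; exact: (op_sym v a1 a2 h).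
by rewrite (addrC (op (true, false) v _ _)).
Qed.

Fixpoint mt (Sp : pred nat) (t : tm V) : tm L2 :=
  match t with
  | Leaf i => Leaf i
  | Node v l r =>
      let hl := has Sp (leaves l) in let hr := has Sp (leaves r) in
      Node ((if hl || hr then (hl, hr) else (false, true)), v) (mt Sp l) (mt Sp r)
  end.

Definition opE' (a : L2) (x y : A) : A := if mk a.1 then op a.1 a.2 x y else 0.

Lemma mt_noS Sp env t : ~~ has Sp (leaves t) ->
  teval opE' env (mt Sp t) = teval opE env (mt Sp t).
Proof.
elim: t => [i|v l IHl r IHr] //=; rewrite has_cat negb_or => /andP[hl hr].
by rewrite (negbTE hl) (negbTE hr) /= IHl // IHr // /opE' /= mkFT.
Qed.

Lemma op0r s v x : mk s -> op s v x 0 = 0.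
Proof. by move=> h; apply: (lf0 (op_r v x h)). Qed.
Lemma op0l s v x : mk s -> op s v 0 x = 0.
Proof. by move=> h; apply: (lf0 (op_l v x h)). Qed.
Lemma opT0r v x : opT v x 0 = 0.
Proof. exact: (lf0 (opT_r v x)). Qed.
Lemma opT0l v x : opT v 0 x = 0.
Proof. exact: (lf0 (opT_l v x)). Qed.

Lemma qpi0I x : Iset x -> qpi Isp x = 0.
Proof. exact: (@qpi_eq0 _ _ Isp x). Qed.

Lemma Hform Sp (a : nat -> A) (qb : nat -> B) (env : nat -> Hat) t :
  (forall i, i \in leaves t -> env i = if Sp i then (0, a i) else (qb i, 0)) ->
  teval opH env t =
  if has Sp (leaves t)
  then (0, teval opE' (fun i => if Sp i then a i else val (qb i)) (mt Sp t))
  else (qpi Isp (teval opE (fun i => if Sp i then a i else val (qb i)) (mt Sp t)), 0).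
Proof.
set envA := fun i => if Sp i then a i else val (qb i).
elim: t => [i|v l IHl r IHr] /= he.
  rewrite orbF he ?inE //; rewrite /envA; case: (Sp i) => //.
  by rewrite qpi_val.
rewrite IHl => [|i hi]; last by apply: he; rewrite mem_cat hi.
rewrite IHr => [|i hi]; last by apply: he; rewrite mem_cat hi orbT.
rewrite has_cat.
case hl: (has Sp (leaves l)); case hr: (has Sp (leaves r)) => /=;
  rewrite /opH /opB /=; congr (_, _).
- by apply: qpi0I; case: (I2 v (val (0 : B)) mkFT Iv0).
- by rewrite (I1a _ _ Iv0) (I1b _ _ Iv0) add0r add0r.
- by apply: qpi0I; case: (I2 v (val (qpi Isp (teval opE envA (mt Sp r)))) mkFT Iv0).
- rewrite (I1a _ _ Iv0) add0r opT0r addr0 /opE' /= mkTF.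
  rewrite (mt_noS _ (negbT hr)); apply: opTF_r; exact: (val_qpi Isp).
- by apply: qpi0I; case: (I2 v (val (qpi Isp (teval opE envA (mt Sp l)))) mkFT Iv0).
- rewrite (I1b _ _ Iv0) addr0 opT0l addr0 /opE' /= mkFT.
  rewrite (mt_noS _ (negbT hl)); apply: opFT_l; exact: (val_qpi Isp).
- by apply: qop; exact: (val_qpi Isp).
- by rewrite op0r // op0l // opT0r !addr0.
Qed.


Lemma mt_allL Sp t : ~~ has Sp (leaves t) -> mt Sp t = allL t.
Proof.
elim: t => [i|v l IHl r IHr] //=; rewrite has_cat negb_or => /andP[hl hr].
by rewrite (negbTE hl) (negbTE hr) IHl // IHr.
Qed.

Lemma tmap_mt Sp t : tmap snd (mt Sp t) = t.
Proof. by elim: t => [i|v l IHl r IHr] //=; rewrite IHl IHr. Qed.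

Lemma leaves_mt Sp t : leaves (mt Sp t) = leaves t.
Proof. by elim: t => [i|v l IHl r IHr] //=; rewrite IHl IHr. Qed.

Lemma filter_nohas (Sp : pred nat) s : ~~ has Sp s -> filter Sp s = [::].
Proof. by rewrite has_filter negbK => /eqP. Qed.

Lemma marked_mt Sp t : has Sp (leaves t) -> marked (mt Sp t) = filter Sp (leaves t).
Proof.
elim: t => [i|v l IHl r IHr] /=; first by rewrite orbF => ->.
rewrite has_cat filter_cat => h; rewrite h /=.
case hl: (has Sp (leaves l)); case hr: (has Sp (leaves r)) => //=.
- by rewrite IHl // IHr.
- by rewrite IHl // (filter_nohas (negbT hr)).
- by rewrite IHr // (filter_nohas (negbT hl)).
- by rewrite hl hr in h.
Qed.

Lemma labels_mt Sp t : mk (true, true) || (count Sp (leaves t) <= 1)%N ->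
  labels_ok okL (mt Sp t).
Proof.
elim: t => [i|v l IHl r IHr] //=; rewrite count_cat => h.
rewrite IHl ?IHr ?andbT; first last.
- by case/orP: h => [->//|h]; apply/orP; right; apply: leq_trans h; rewrite leq_addr.
- by case/orP: h => [->//|h]; apply/orP; right; apply: leq_trans h; rewrite leq_addl.
rewrite !has_count.
case hl: (0 < count Sp (leaves l))%N; case hr: (0 < count Sp (leaves r))%N => //=.
case/orP: h => // h; exfalso.
by move: h hl hr; case: (count Sp _) => [|?]; case: (count Sp _) => [|?] //=; rewrite addnS.
Qed.

Lemma opE'0l a y : opE' a 0 y = 0.
Proof. by rewrite /opE'; case: ifP => // h; rewrite op0l. Qed.
Lemma opE'0r a y : opE' a y 0 = 0.
Proof. by rewrite /opE'; case: ifP => // h; rewrite op0r. Qed.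

Lemma mt_zero Sp env t : ~~ mk (true, true) -> (1 < count Sp (leaves t))%N ->
  teval opE' env (mt Sp t) = 0.
Proof.
move=> nTT; elim: t => [i|v l IHl r IHr] /=; first by rewrite addn0; case: (Sp i).
rewrite count_cat => h.
case h1: (1 < count Sp (leaves l))%N; first by rewrite IHl // opE'0l.
case h2: (1 < count Sp (leaves r))%N; first by rewrite IHr // opE'0r.
have hl : has Sp (leaves l).
  by rewrite has_count; move: h h1 h2; case: (count Sp (leaves l)) => [|[|?]] //; case: (count Sp _) => [|[|?]].
have hr : has Sp (leaves r).
  by rewrite has_count; move: h h1 h2; case: (count Sp (leaves r)) => [|[|?]] //; rewrite ?addn0; case: (count Sp _) => [|[|?]].
by rewrite hl hr /= /opE' /= (negbTE nTT).
Qed.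

Lemma teval_opE' env t : labels_ok okL t -> teval opE' env t = teval opE env t.
Proof.
elim: t => [i|a l IHl r IHr] //= /and3P[ha hl hr].
by rewrite IHl // IHr // /opE' ha.
Qed.


Lemma opH_l a : predT a -> forall k x x' y, opH a (k *: x + x') y = k *: opH a x y + opH a x' y.
Proof. by case: opH_tri => _ h _ _; apply: h. Qed.
Lemma opH_r a : predT a -> forall x k y y', opH a x (k *: y + y') = k *: opH a x y + opH a x y'.
Proof. by case: opH_tri => _ _ h _; apply: h. Qed.

Lemma labels_predT (t : tm V) : labels_ok predT t.
Proof. by elim: t => [i|a l IHl r IHr] //=; rewrite IHl IHr. Qed.

Lemma fst_sum (I : Type) (s : seq I) (F : I -> Hat) : (\sum_(i <- s) F i).1 = \sum_(i <- s) (F i).1.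
Proof. by apply: (@lf_sum _ Hat B (fun x => x.1)). Qed.
Lemma snd_sum (I : Type) (s : seq I) (F : I -> Hat) : (\sum_(i <- s) F i).2 = \sum_(i <- s) (F i).2.
Proof. by apply: (@lf_sum _ Hat A (fun x => x.2)). Qed.

Lemma qpi_sum (I : Type) (s : seq I) (F : I -> A) :
  qpi Isp (\sum_(i <- s) F i) = \sum_(i <- s) qpi Isp (F i).
Proof. by apply: (@lf_sum _ A B (qpi Isp)) => k x y; rewrite qpi_lin. Qed.

Lemma Hat0 (x : Hat) : x.1 = 0 -> x.2 = 0 -> x = 0.
Proof. by case: x => a b /= -> ->. Qed.

Lemma opH_rel r : R r -> forall env, peval opH env r = 0.
Proof.
move=> hr env.
have hrl := HR hr.
have hq p : p \in r -> perm_eq (leaves p.2) (iota 0 3) by move=> hp; move/allP: hrl => /(_ p hp).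
have split j E x y : (j < 3)%N ->
    peval opH (upd E j (x + y)) r = peval opH (upd E j x) r + peval opH (upd E j y) r.
  move=> hj; rewrite /peval -big_split /=; apply: eq_big_seq => p hp.
  have -> : x + y = 1 *: x + y by rewrite scale1r.
  rewrite (@teval_upd_lin _ _ _ opH predT opH_l opH_r E j p.2 1 x y) ?labels_predT ?(cnt1 (hq p hp) hj) //.
  by rewrite scale1r scalerDr.
pose c (b : bool) i : Hat := if b then (0, (env i).2) else ((env i).1, 0).
have hc i : env i = c false i + c true i.
  by rewrite Hat_add /c /= addr0 add0r; case: (env i).
pose E3 x0 x1 x2 : nat -> Hat := fun i => if i == 0%N then x0 else if i == 1%N then x1
  else if i == 2%N then x2 else env i.
pose E b0 b1 b2 := E3 (c b0 0%N) (c b1 1%N) (c b2 2%N).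
have Zero b0 b1 b2 : peval opH (E b0 b1 b2) r = 0.
  pose Sp i := ((i == 0%N) && b0) || ((i == 1%N) && b1) || ((i == 2%N) && b2).
  pose envA i := if Sp i then (env i).2 else val (env i).1.
  have hE p : p \in r -> teval opH (E b0 b1 b2) p.2 =
      if has Sp [:: 0; 1; 2]%N then (0, teval opE' envA (mt Sp p.2))
      else (qpi Isp (teval opE envA (mt Sp p.2)), 0).
    move=> hp; rewrite -(perm_has _ (hq p hp)).
    apply: Hform => i; rewrite (perm_mem (hq p hp)) !inE => /or3P [] /eqP ->;
      by rewrite /E /E3 /c /Sp /= ?orbF; case: ifP.
  have -> : peval opH (E b0 b1 b2) r = \sum_(p <- r) p.1 *: (if has Sp [:: 0; 1; 2]%N then
        (0, teval opE' envA (mt Sp p.2)) else (qpi Isp (teval opE envA (mt Sp p.2)), 0)).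
    by apply: eq_big_seq => p hp; rewrite hE.
  case hS: (has Sp _).
  - have h2 : \sum_(p <- r) p.1 *: teval opE' envA (mt Sp p.2) = 0.
      case hTT: (mk (true, true) || (count Sp [:: 0; 1; 2]%N <= 1)%N).
      + have hl p : p \in r -> labels_ok okL (mt Sp p.2).
          by move=> hp; apply: labels_mt; rewrite (permP (hq p hp)).
        rewrite (eq_big_seq (fun p => p.1 *: teval opE envA (mt Sp p.2))); last first.
          by move=> p hp; rewrite teval_opE' // hl.
        have := @HadR 3 r (mt Sp) (filter Sp [:: 0; 1; 2]%N) envA.
        rewrite /peval big_map; apply.
        * by move=> p hp; rewrite hl // leaves_mt hq.
        * move=> p hp; rewrite marked_mt; last by rewrite (perm_has _ (hq p hp)).
          exact: perm_filter (hq p hp).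
        * have -> : [seq (p.1, tmap snd (mt Sp p.2)) | p <- r] =
                    [seq (p.1, plug Hole (tsubst Leaf p.2)) | p <- r].
            by apply: eq_map => p; rewrite tmap_mt tsubst_id.
          by apply: pideal_gen; apply: pgen_rel.
      + apply: big1_seq => p hp; rewrite mt_zero ?scaler0 //.
          by move: hTT; case: (mk _).
        by rewrite (permP (hq p hp)); move: hTT; rewrite ltnNge; case: (mk _) => //= ->.
    apply: Hat0.
    + by rewrite fst_sum; apply: big1 => p _; rewrite Hat_scale /= scaler0.
    + by rewrite snd_sum -[RHS]h2; apply: eq_bigr => p _; rewrite Hat_scale.
  - apply: Hat0.
    + rewrite fst_sum.
      rewrite (eq_big_seq (fun p => qpi Isp (p.1 *: teval opE envA (allL p.2)))); last first.
        move=> p hp; rewrite Hat_scale /= -qpiZ; rewrite mt_allL //.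
        by rewrite (perm_has _ (hq p hp)) hS.
      rewrite -qpi_sum; apply: qpi0I.
      by have := I4 envA hr; rewrite /peval big_map.
    + by rewrite snd_sum; apply: big1 => p _; rewrite Hat_scale /= scaler0.
have sp0 x y x1 x2 : peval opH (E3 (x + y) x1 x2) r = peval opH (E3 x x1 x2) r + peval opH (E3 y x1 x2) r.
  have e z : E3 z x1 x2 = upd (E3 0 x1 x2) 0 z.
    by apply: functional_extensionality => i; rewrite /E3 /upd; case: eqP.
  by rewrite (e (x + y)) (e x) (e y) split.
have sp1 x y x0 x2 : peval opH (E3 x0 (x + y) x2) r = peval opH (E3 x0 x x2) r + peval opH (E3 x0 y x2) r.
  have e z : E3 x0 z x2 = upd (E3 x0 0 x2) 1 z.
    by apply: functional_extensionality => i; rewrite /E3 /upd; case: eqP => [->|] //; case: eqP.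
  by rewrite (e (x + y)) (e x) (e y) split.
have sp2 x y x0 x1 : peval opH (E3 x0 x1 (x + y)) r = peval opH (E3 x0 x1 x) r + peval opH (E3 x0 x1 y) r.
  have e z : E3 x0 x1 z = upd (E3 x0 x1 0) 2 z.
    apply: functional_extensionality => i; rewrite /E3 /upd; case: eqP => [->|] //.
    by case: eqP => [->|] //; case: eqP.
  by rewrite (e (x + y)) (e x) (e y) split.
have -> : env = E3 (c false 0%N + c true 0%N) (c false 1%N + c true 1%N) (c false 2%N + c true 2%N).
  apply: functional_extensionality => i; rewrite /E3.
  by case: eqP => [->|_]; [|case: eqP => [->|_]; [|case: eqP => [->|_]]]; rewrite -?hc.
rewrite sp0 !sp1 !sp2.
by rewrite !(Zero false) !(Zero true) !addr0.
Qed.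

Lemma Hat_Palg : P_alg tau R opH.
Proof.
split; first exact: opH_tri.
- exact: opH_sym.
- exact: opH_rel.
Qed.


Definition lift (a1 a2 : int -> A) : int -> Hat := fun t => (qpi Isp (a1 t), a2 t).
Definition z0 : int -> A := fun _ => 0.

Lemma opH_qpi v x1 x2 y1 y2 : opH v (qpi Isp x1, x2) (qpi Isp y1, y2) =
  (qpi Isp (op (false, true) v x1 y1),
   op (false, true) v x1 y2 + op (true, false) v x2 y1 + opT v x2 y2).
Proof.
rewrite /opH /opB /=; congr (_, _); first by apply: qop; exact: (val_qpi Isp).
by rewrite (opFT_l _ _ (val_qpi Isp x1)) (opTF_r _ _ (val_qpi Isp y1)).
Qed.

Definition Loc x y := forall s v, mk s -> local_op (op s v) x y /\ local_op (op s v) y x.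

Lemma Loc_zr x : Loc x z0.
Proof. by move=> s v hs; split; apply: zb_0 => ? ?; rewrite /dprod /z0 ?op0r ?op0l. Qed.
Lemma Loc_zl x : Loc z0 x.
Proof. by move=> s v hs; split; apply: zb_0 => ? ?; rewrite /dprod /z0 ?op0r ?op0l. Qed.

Lemma opT_loc x y v : Loc x y -> local_op (opT v) x y /\ local_op (opT v) y x.
Proof.
move=> h; case hT: (mk (true, true)).
  have [h1 h2] := h _ v hT.
  by split; [apply: zb_ext h1 | apply: zb_ext h2] => s t; rewrite /dprod /opT hT.
by split; apply: zb_0 => s t; rewrite /dprod /opT hT.
Qed.

Lemma qpiB x y : qpi Isp (x - y) = qpi Isp x - qpi Isp y.
Proof. by apply: (@lfB _ A B (qpi Isp)) => k x' y'; rewrite qpi_lin. Qed.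

Lemma zb_pair (G : int -> int -> Hat) : zb (fun s t => (G s t).1) -> zb (fun s t => (G s t).2) -> zb G.
Proof.
move=> [N1 h1] [N2 h2]; exists (N1 + N2)%N => s t; apply: Hat0.
- rewrite (@iter_map _ Hat B (fun x => x.1)) // addnC.
  exact: (@iter_mono _ _ (fun s t => (G s t).1) N1 h1).
- rewrite (@iter_map _ Hat A (fun x => x.2)) //.
  exact: (@iter_mono _ _ (fun s t => (G s t).2) N2 h2).
Qed.

Lemma LiftLoc1 v a1 a2 b1 b2 : local_op (op (false, true) v) a1 b1 ->
  local_op (op (false, true) v) a1 b2 -> local_op (op (true, false) v) a2 b1 ->
  local_op (opT v) a2 b2 -> local_op (opH v) (lift a1 a2) (lift b1 b2).
Proof.
move=> h1 h2 h3 h4; apply: zb_pair.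
  apply: zb_ext (zb_map qpiB h1) => s t; by rewrite /dprod /lift opH_qpi.
apply: zb_ext (zb_add (zb_add h2 h3) h4) => s t; by rewrite /dprod /lift opH_qpi.
Qed.

Lemma LiftLoc a1 a2 b1 b2 : Loc a1 b1 -> Loc a1 b2 -> Loc a2 b1 -> Loc a2 b2 ->
  local opH (lift a1 a2) (lift b1 b2).
Proof.
move=> h11 h12 h21 h22 v; split; apply: LiftLoc1.
- by case: (h11 _ v mkFT).
- by case: (h12 _ v mkFT).
- by case: (h21 _ v mkTF).
- by case: (opT_loc v h22).
- by case: (h11 _ v mkFT).
- by case: (h21 _ v mkFT).
- by case: (h12 _ v mkTF).
- by case: (opT_loc v h22).
Qed.

Lemma nprod_lift v n a1 a2 b1 b2 t :
  nprod (opH v) n (lift a1 a2) (lift b1 b2) t =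
  (qpi Isp (nprod (op (false, true) v) n a1 b1 t),
   nprod (op (false, true) v) n a1 b2 t + nprod (op (true, false) v) n a2 b1 t +
   nprod (opT v) n a2 b2 t).
Proof.
rewrite [LHS]surjective_pairing /nprod; congr (_, _).
- rewrite (@iter_map _ _ B (fun x => x.1)) // (@iter_map _ A B (qpi Isp) qpiB).
  by apply: iter_ext => s t'; rewrite /dprod /lift opH_qpi.
- rewrite (@iter_map _ _ A (fun x => x.2)) // -!iter_add.
  by apply: iter_ext => s t'; rewrite /dprod /lift opH_qpi.
Qed.

Section SE.
Hypothesis HD : Dong_P tau R.

Lemma SE a1 a2 b1 b2 c1 c2 n v v' :
  Loc a1 b1 -> Loc a1 b2 -> Loc a2 b1 -> Loc a2 b2 ->
  Loc b1 c1 -> Loc b1 c2 -> Loc b2 c1 -> Loc b2 c2 ->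
  Loc a1 c1 -> Loc a1 c2 -> Loc a2 c1 -> Loc a2 c2 ->
  let X1 := nprod (op (false, true) v) n a1 b1 in
  let X2 := fun t => nprod (op (false, true) v) n a1 b2 t +
     nprod (op (true, false) v) n a2 b1 t + nprod (opT v) n a2 b2 t in
  zb (fun s t => op (false, true) v' (X1 s) (c2 t) + op (true, false) v' (X2 s) (c1 t) +
                 opT v' (X2 s) (c2 t)) /\
  zb (fun s t => op (false, true) v' (c1 s) (X2 t) + op (true, false) v' (c2 s) (X1 t) +
                 opT v' (c2 s) (X2 t)).
Proof.
move=> ab11 ab12 ab21 ab22 bc11 bc12 bc21 bc22 ac11 ac12 ac21 ac22 X1 X2.
have := HD Hat_Palg (LiftLoc ab11 ab12 ab21 ab22) (LiftLoc bc11 bc12 bc21 bc22)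
  (LiftLoc ac11 ac12 ac21 ac22) v n v'.
case=> H1 H2; split.
- apply: zb_ext (zb_map (f := fun x : Hat => x.2) _ H1) => // s t.
  by rewrite /dprod nprod_lift /lift opH_qpi.
- apply: zb_ext (zb_map (f := fun x : Hat => x.2) _ H2) => // s t.
  by rewrite /dprod nprod_lift /lift opH_qpi.
Qed.
End SE.


Lemma nz_l (f : A -> A -> A) n b t : (forall y, f 0 y = 0) -> nprod f n z0 b t = 0.
Proof. by move=> h; rewrite /nprod; apply: iter_zero => s t'; rewrite /dprod /z0 h. Qed.
Lemma nz_r (f : A -> A -> A) n a t : (forall y, f y 0 = 0) -> nprod f n a z0 t = 0.
Proof. by move=> h; rewrite /nprod; apply: iter_zero => s t'; rewrite /dprod /z0 h. Qed.

Lemma iter_I (G : int -> int -> A) N : (forall s t, Iset (G s t)) ->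
  forall s t, Iset (iter N (@mul_wz K A) G s t).
Proof.
elim: N => [|N IH] h s t; first exact: (h s t).
by rewrite /mul_wz; apply: (spB (S := Isp)); apply: IH.
Qed.

Section Core.
Hypothesis HD : Dong_P tau R.
Hypothesis mkFF : ~~ mk (false, false).

Lemma Core_gen a1 a2 b1 b2 c (Xs : int -> A) n v v' :
  Loc a1 b1 -> Loc a1 b2 -> Loc a2 b1 -> Loc a2 b2 ->
  Loc b1 c -> Loc b2 c -> Loc a1 c -> Loc a2 c ->
  (forall t, nprod (op (false, true) v) n a1 b1 t = 0) ->
  (forall t, nprod (op (false, true) v) n a1 b2 t +
     nprod (op (true, false) v) n a2 b1 t + nprod (opT v) n a2 b2 t = Xs t) ->
  [/\ zb (dprod (op (true, false) v') Xs c), zb (dprod (op (false, true) v') c Xs),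
      zb (dprod (opT v') Xs c) & zb (dprod (opT v') c Xs)].
Proof.
move=> h11 h12 h21 h22 hb1 hb2 ha1 ha2 hX1 hX2.
have [A1 A2] := SE HD n v v' h11 h12 h21 h22 hb1 (Loc_zr b1) hb2 (Loc_zr b2)
  ha1 (Loc_zr a1) ha2 (Loc_zr a2).
have [B1 B2] := SE HD n v v' h11 h12 h21 h22 (Loc_zr b1) hb1 (Loc_zr b2) hb2
  (Loc_zr a1) ha1 (Loc_zr a2) ha2.
split.
- apply: zb_ext A1 => s t /=; by rewrite hX2 /z0 !op0r // opT0r add0r addr0.
- apply: zb_ext A2 => s t /=; by rewrite hX2 /z0 !op0l // opT0l addr0 addr0.
- apply: zb_ext B1 => s t /=; by rewrite hX1 hX2 /z0 op0l // op0r // add0r add0r.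
- apply: zb_ext B2 => s t /=; by rewrite hX1 hX2 /z0 op0l // op0r // add0r add0r.
Qed.

Lemma Core_X2 a b c s v v' n : mk s -> Loc a b -> Loc b c -> Loc a c ->
  [/\ zb (dprod (op (true, false) v') (nprod (op s v) n a b) c),
      zb (dprod (op (false, true) v') c (nprod (op s v) n a b)),
      zb (dprod (opT v') (nprod (op s v) n a b) c) &
      zb (dprod (opT v') c (nprod (op s v) n a b))].
Proof.
move=> hs hab hbc hac.
case: s hs => [[] []] hs.
- apply: (@Core_gen z0 a z0 b c _ n v v') => //; try exact: Loc_zl; try exact: Loc_zr.
  + by move=> t; apply: nz_l => y; rewrite op0l.
  + move=> t; rewrite (@nz_l (op (false, true) v)); last by move=> y; rewrite op0l.
    rewrite (@nz_r (op (true, false) v)); last by move=> y; rewrite op0r.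
    by rewrite !add0r /nprod; apply: iter_ext => s' t'; rewrite /dprod /opT hs.
- apply: (@Core_gen z0 a b z0 c _ n v v') => //; try exact: Loc_zl; try exact: Loc_zr.
  + by move=> t; apply: nz_l => y; rewrite op0l.
  + move=> t; rewrite (@nz_l (op (false, true) v)); last by move=> y; rewrite op0l.
    rewrite (@nz_r (opT v)); last by move=> y; rewrite opT0r.
    by rewrite add0r addr0.
- apply: (@Core_gen a z0 z0 b c _ n v v') => //; try exact: Loc_zl; try exact: Loc_zr.
  + by move=> t; apply: nz_r => y; rewrite op0r.
  + move=> t; rewrite (@nz_l (op (true, false) v)); last by move=> y; rewrite op0l.
    rewrite (@nz_l (opT v)); last by move=> y; rewrite opT0l.
    by rewrite !addr0.
- by move: mkFF; rewrite hs.
Qed.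

Lemma Core_X1 a b c v v' n : Loc a b -> Loc b c -> Loc a c ->
  zb (dprod (op (false, true) v') (nprod (op (false, true) v) n a b) c) /\
  zb (dprod (op (true, false) v') c (nprod (op (false, true) v) n a b)).
Proof.
move=> hab hbc hac.
have hX2 t : nprod (op (false, true) v) n a z0 t + nprod (op (true, false) v) n z0 b t +
    nprod (opT v) n z0 z0 t = 0.
  rewrite nz_r ?nz_l ?add0r //; [by move=> y; rewrite opT0l | by move=> y; rewrite op0l |].
  by move=> y; rewrite op0r.
have [B1 B2] := SE HD n v v' hab (Loc_zr a) (Loc_zl b) (Loc_zl z0) (Loc_zr b) hbc
  (Loc_zl z0) (Loc_zl c) (Loc_zr a) hac (Loc_zl z0) (Loc_zl c).
split.
- apply: zb_ext B1 => s t /=; by rewrite hX2 /z0 op0r // opT0l !addr0.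
- apply: zb_ext B2 => s t /=; by rewrite hX2 /z0 op0l // opT0r add0r addr0.
Qed.

Lemma diffI s v n a b t : mk s ->
  Iset (nprod (op s v) n a b t - nprod (op (false, true) v) n a b t).
Proof.
move=> hs; rewrite /nprod -iter_sub; apply: iter_I => s' t'; exact: I3.
Qed.

Lemma Core a b c s v s' v' n : mk s -> mk s' -> Loc a b -> Loc b c -> Loc a c ->
  local_op (op s' v') (nprod (op s v) n a b) c /\ local_op (op s' v') c (nprod (op s v) n a b).
Proof.
move=> hs hs' hab hbc hac.
have [X2a X2b X2c X2d] := Core_X2 v v' n hs hab hbc hac.
have [X1a X1b] := Core_X1 v v' n hab hbc hac.
case: s' hs' => [[] []] hs'.
- split.
    by apply: zb_ext X2c => s0 t; rewrite /dprod /opT hs'.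
  by apply: zb_ext X2d => s0 t; rewrite /dprod /opT hs'.
- split => //.
  apply: zb_ext X1b => s0 t; rewrite /dprod; apply: opTF_r.
  by apply: (spBC (S := Isp)); apply: diffI.
- split => //.
  apply: zb_ext X1a => s0 t; rewrite /dprod; apply: opFT_l.
  by apply: (spBC (S := Isp)); apply: diffI.
- by move: mkFF; rewrite hs'.
Qed.
End Core.


Lemma had_single s v x y : mk s ->
  Had_act mk op (fun s0 => if s0 == s then v else 0) x y = op s v x y.
Proof.
move=> hs; rewrite /Had_act (bigD1 s) //= eqxx big1 ?addr0 // => s0 /andP[hs0 ne].
rewrite (negbTE ne); exact: (@lf0 _ V A (fun w => op s0 w x y) (op_v x y hs0)).
Qed.

Lemma toLoc x y : local (Had_act mk op) x y -> Loc x y.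
Proof.
move=> H s v hs; have [h1 h2] := H (fun s0 => if s0 == s then v else 0).
by split; [apply: zb_ext h1 | apply: zb_ext h2] => s1 t; rewrite /dprod had_single.
Qed.

Lemma main_local (HD : Dong_P tau R) (mkFF : ~~ mk (false, false)) a b c :
  local (Had_act mk op) a b -> local (Had_act mk op) b c -> local (Had_act mk op) a c ->
  forall (w : bool * bool -> V) n, local (Had_act mk op) (nprod (Had_act mk op w) n a b) c.
Proof.
move=> Hab Hbc Hac w n w'.
have hab := toLoc Hab; have hbc := toLoc Hbc; have hac := toLoc Hac.
have hX t : nprod (Had_act mk op w) n a b t = \sum_(s | mk s) nprod (op s (w s)) n a b t.
  rewrite /nprod -iter_sum; apply: iter_ext => s0 t0; by rewrite /dprod /Had_act.
split.
- apply: (zb_ext (F := fun s t => \sum_(s' | mk s') \sum_(s0 | mk s0)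
      op s' (w' s') (nprod (op s0 (w s0)) n a b s) (c t))).
    move=> s t; rewrite /dprod /Had_act hX; apply: eq_bigr => s' hs'.
    by rewrite (@lf_sum _ A A (fun x => op s' (w' s') x (c t)) (op_l (w' s') (c t) hs')).
  apply: zb_sum => s' hs'; apply: zb_sum => s0 hs0.
  by have [h _] := Core HD mkFF (w s0) (w' s') n hs0 hs' hab hbc hac.
- apply: (zb_ext (F := fun s t => \sum_(s' | mk s') \sum_(s0 | mk s0)
      op s' (w' s') (c s) (nprod (op s0 (w s0)) n a b t))).
    move=> s t; rewrite /dprod /Had_act hX; apply: eq_bigr => s' hs'.
    by rewrite (@lf_sum _ A A (fun x => op s' (w' s') (c s) x) (op_r (w' s') (c s) hs')).
  apply: zb_sum => s' hs'; apply: zb_sum => s0 hs0.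
  by have [_ h] := Core HD mkFF (w s0) (w' s') n hs0 hs' hab hbc hac.
Qed.

End Main.

Lemma Dong_gen (mk : pred (bool * bool)) (K : fieldType) (V : vectType K) (tau : V -> V)
    (R : fsum K V -> Prop) :
  quadratic_rel R -> mk (true, false) -> mk (false, true) -> ~~ mk (false, false) ->
  Dong_P tau R -> Dong_Had mk tau R.
Proof.
move=> HR mkTF mkFT mkFF HD A op Hop a b c Hab Hbc Hac w n.
exact: (main_local HR mkTF mkFT Hop HD mkFF Hab Hbc Hac w n).
Qed.

Theorem mainTheorem1 (K : fieldType) (V : vectType K)
    (tau : {linear V -> V}) (Htau : involutive tau)
    (R : fsum K V -> Prop) (HR : quadratic_rel R) :
  Dong_P tau R ->
  Dong_Had Perm_mark tau R /\ Dong_Had ComTriAs_mark tau R.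
Proof.
by move=> HD; split; apply: Dong_gen.
Qed.
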